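(* Let $A$ be a real symmetric $r$-matrix of order $n$. If $\eta^{(p)}(A)=n^{-r/p}|\Sigma A|$ for some $p>1$, then $A$ is regular.
   Context: A cubical $r$-matrix of order $n$ is a function $A$ on $[n]^r$ with entries $a_{i_1,\ldots,i_r}$; symmetric means invariant under permutations of indices. $\Sigma B$ denotes the sum of all entries of a matrix $B$. $P_A(\mathbf{x})=\sum a_{i_1,\ldots,i_r}x_{i_1}\cdots x_{i_r}$ and $\eta^{(p)}(A)=\max\{|P_A(\mathbf{x})|:\mathbf{x}\in\mathbb{R}^n,|\mathbf{x}|_p=1\}$. For $k\in[r]$, $s\in[n]$, the slice $A^{(k)}_s$ is the $(r-1)$-matrix obtained by fixing $i_k=s$. $A$ is regular if for every $k\in[r]$, $\Sigma A^{(k)}_1=\cdots=\Sigma A^{(k)}_n$. *)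

(* Defs.v *)
From mathcomp Require Import all_boot all_order all_algebra all_fingroup.
From mathcomp Require Import all_classical all_reals all_analysis.
Set Implicit Arguments. Unset Strict Implicit. Unset Printing Implicit Defensive.
Import Order.TTheory GRing.Theory Num.Theory.
Local Open Scope ring_scope.
Local Open Scope classical_set_scope.

Definition mindex (r n : nat) := {ffun 'I_r -> 'I_n}.

Definition cmatrix (R : realType) (r n : nat) := mindex r n -> R.

Section CMatrix.
Context {R : realType} {r n : nat}.

Definition cm_symmetric (A : cmatrix R r n) : Prop :=
  forall (s : {perm 'I_r}) (i : mindex r n), A [ffun k => i (s k)] = A i.

Definition cm_sum (A : cmatrix R r n) : R := \sum_(i : mindex r n) A i.

Definition slice_sum (A : cmatrix R r n) (k : 'I_r) (s : 'I_n) : R :=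
  \sum_(i : mindex r n | i k == s) A i.

Definition cm_regular (A : cmatrix R r n) : Prop :=
  forall (k : 'I_r) (s t : 'I_n), slice_sum A k s = slice_sum A k t.

Definition cm_form (A : cmatrix R r n) (x : 'I_n -> R) : R :=
  \sum_(i : mindex r n) A i * \prod_(k < r) x (i k).

Definition pnorm (p : R) (x : 'I_n -> R) : R :=
  (\sum_(j < n) `|x j| `^ p) `^ (p^-1).

(* eta^(p)(A) = max { |P_A(x)| : |x|_p = 1 } (the max exists by compactness;
   we take the supremum of the set, which equals that maximum) *)
Definition eta (p : R) (A : cmatrix R r n) : R :=
  sup [set `|cm_form A x| | x in [set x : 'I_n -> R | pnorm p x = 1]].

End CMatrix.

(* Main.v *)
Set Warnings "-notation-overridden,-ambiguous-paths,-notation-incompatible-prefix".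
Require Import Defs.
From mathcomp Require Import all_boot all_order all_algebra all_fingroup.
From mathcomp Require Import all_classical all_reals all_analysis.
From mathcomp Require Import lra.
Import Order.TTheory GRing.Theory Num.Theory.
Local Open Scope ring_scope.

Section Helpers.
Context {R : realType} {r n : nat}.

Lemma form_scale (A : cmatrix R r n) (a : R) (x : 'I_n -> R) :
  cm_form A (fun j => a * x j) = a ^+ r * cm_form A x.
Proof.
rewrite /cm_form mulr_sumr; apply: eq_bigr => i _.
by rewrite big_split /= prodr_const card_ord mulrCA.
Qed.

Lemma pnorm1_sum (p : R) (x : 'I_n -> R) : 0 < p -> pnorm p x = 1 ->
  \sum_(j < n) `|x j| `^ p = 1.
Proof.
move=> p0; rewrite /pnorm => h.
have := congr1 (fun t => t `^ p) h; rewrite -powRrM mulVf ?gt_eqF //.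
rewrite powRr1 ?powR1 //; apply: sumr_ge0 => j _; exact: powR_ge0.
Qed.

Lemma pnorm1_le1 (p : R) (x : 'I_n -> R) (j : 'I_n) : 0 < p -> pnorm p x = 1 ->
  `|x j| <= 1.
Proof.
move=> p0 h; have hs := pnorm1_sum _ _ p0 h.
rewrite leNgt; apply/negP => hj.
have : 1 `^ p < `|x j| `^ p by apply: (gt0_ltr_powR p0); rewrite ?nnegrE ?normr_ge0 ?ler01.
rewrite powR1 => hlt.
have : `|x j| `^ p <= \sum_(j0 < n) `|x j0| `^ p.
  rewrite (bigD1 j) //= lerDl sumr_ge0 // => i _; exact: powR_ge0.
by rewrite hs => /(lt_le_trans hlt); rewrite ltxx.
Qed.

Lemma form_bound (A : cmatrix R r n) (p : R) (x : 'I_n -> R) : 0 < p ->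
  pnorm p x = 1 -> `|cm_form A x| <= \sum_i `|A i|.
Proof.
move=> p0 h; rewrite /cm_form; apply: le_trans (ler_norm_sum _ _ _) _.
apply: ler_sum => i _; rewrite normrM -[leRHS]mulr1 ler_wpM2l //.
rewrite normr_prod; apply: prodr_ile1 => k _; rewrite normr_ge0 /=.
exact: pnorm1_le1 _ _ _ p0 h.
Qed.

Lemma eta_ub (A : cmatrix R r n) (p : R) (x : 'I_n -> R) : 0 < p ->
  pnorm p x = 1 -> `|cm_form A x| <= eta p A.
Proof.
move=> p0 h; rewrite /eta; apply: ub_le_sup; last by exists x.
exists (\sum_i `|A i|) => _ [y hy <-]; exact: form_bound _ _ _ p0 hy.
Qed.

Lemma key_ineq (A : cmatrix R r n) (p : R) (y : 'I_n -> R) : 0 < p ->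
  0 < \sum_(j < n) `|y j| `^ p ->
  `|cm_form A y| <= eta p A * ((\sum_(j < n) `|y j| `^ p) `^ p^-1) ^+ r.
Proof.
move=> p0; set N := \sum_(j < n) _ => N0.
set b := N `^ p^-1.
have b0 : 0 < b by apply: powR_gt0.
have hz : pnorm p (fun j => b^-1 * y j) = 1.
  rewrite /pnorm.
  have -> : \sum_(j < n) `|b^-1 * y j| `^ p = b^-1 `^ p * N.
    rewrite /N mulr_sumr; apply: eq_bigr => j _.
    have bi : 0 < b^-1 by rewrite invr_gt0.
    by rewrite normrM (gtr0_norm bi) powRM // ltW.
  rewrite /b -powRN -powRrM mulNr mulVf ?gt_eqF // powR_inv1 ?ltW //.
  by rewrite mulVf ?gt_eqF // powR1.
have bi : 0 < b^-1 by rewrite invr_gt0.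
have := eta_ub A _ _ p0 hz; rewrite form_scale normrM normrX (gtr0_norm bi).
move=> h; have br : 0 < b ^+ r by rewrite exprn_gt0.
have -> : `|cm_form A y| = b ^+ r * (b ^+ r)^-1 * `|cm_form A y|.
  by rewrite mulfV ?gt_eqF // mul1r.
rewrite -mulrA mulrC; apply: ler_wpM2r; [exact: ltW | by rewrite -exprVn].
Qed.

Lemma slice_sym (A : cmatrix R r n) (k k' : 'I_r) (s : 'I_n) :
  cm_symmetric A -> slice_sum A k s = slice_sum A k' s.
Proof.
move=> hA; rewrite /slice_sum.
pose phi (i : mindex r n) : mindex r n := [ffun l => i (tperm k k' l)].
have phiK : involutive phi.
  by move=> i; apply/ffunP => l; rewrite !ffunE tpermK.
rewrite (reindex_inj (inv_inj phiK)) /=.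
apply: eq_big => i; first by rewrite /phi ffunE tpermL.
by move=> _; rewrite /phi hA.
Qed.

Lemma affine_derive (c w x : R) : is_derive x 1 (fun t : R => c + t * w) w.
Proof.
have h := is_deriveD (is_derive_cst c x 1)
  (is_deriveM (is_derive_id x (1 : R)) (is_derive_cst w x 1)).
move: h; rewrite /= scaler0 add0r scaler1 add0r => h.
exact: h.
Qed.

Lemma prod_derivable (m : nat) (w : 'I_m -> R) (c x : R) :
  derivable (fun t : R => \prod_(k < m) (c + t * w k)) x (1 : R).
Proof.
elim: m w => [|m ih] w.
  have -> : (fun t : R => \prod_(k < 0) (c + t * w k)) = cst 1.
    by apply: funext => t; rewrite big_ord0.
  exact: derivable_cst.
have -> : (fun t : R => \prod_(k < m.+1) (c + t * w k)) =
  (fun t : R => \prod_(k < m) (c + t * w (widen_ord (leqnSn m) k))) *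
  (fun t : R => c + t * w ord_max).
  by apply: funext => t; rewrite big_ord_recr.
apply: derivableM; first exact: ih.
by have [] := affine_derive c (w ord_max) x.
Qed.

Lemma prod_derive0 (m : nat) (w : 'I_m -> R) (c : R) :
  is_derive (0 : R) (1 : R) (fun t : R => \prod_(k < m) (c + t * w k)) (c ^+ m.-1 * \sum_(k < m) w k).
Proof.
elim: m w => [|m ih] w.
  have -> : (fun t : R => \prod_(k < 0) (c + t * w k)) = cst 1.
    by apply: funext => t; rewrite big_ord0.
  by rewrite big_ord0 mulr0; exact: is_derive_cst.
have -> : (fun t : R => \prod_(k < m.+1) (c + t * w k)) =
  (fun t : R => \prod_(k < m) (c + t * w (widen_ord (leqnSn m) k))) *
  (fun t : R => c + t * w ord_max).
  by apply: funext => t; rewrite big_ord_recr.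
have h := is_deriveM (ih (fun k => w (widen_ord (leqnSn m) k))) (affine_derive c (w ord_max) 0).
apply: (is_derive_eq h); rewrite /= big_ord_recr /=.
have -> : \prod_(k < m) (c + 0 * w (widen_ord (leqnSn m) k)) = c ^+ m.
  by rewrite -[in RHS](card_ord m) -prodr_const; apply: eq_bigr => k _; rewrite mul0r addr0.
rewrite mul0r addr0 /GRing.scale /=.
set S := \sum_(k < m) _.
have aux : c * (c ^+ m.-1 * S) = c ^+ m * S.
  have : m = 0%N -> S = 0.
    by move=> m0; apply: big1 => k _; have := ltn_ord k; rewrite {2}m0.
  by case: (m) => [|m'] /= => [->|_]; rewrite ?mulr0 // exprS mulrA.
by rewrite aux mulrDr addrC.
Qed.

Lemma sum_is_derive (I : finType) (f : I -> R -> R) (d : I -> R) (x : R) :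
  (forall i, is_derive x (1 : R) (f i) (d i)) ->
  is_derive x (1 : R) (fun t => \sum_(i : I) f i t) (\sum_(i : I) d i).
Proof.
move=> hd.
suff : forall s : seq I,
  is_derive x (1 : R) (fun t => \sum_(i <- s) f i t) (\sum_(i <- s) d i) by apply.
elim => [|a s ih].
  have -> : (fun t => \sum_(i <- [::]) f i t) = cst 0.
    by apply: funext => t; rewrite big_nil.
  by rewrite big_nil; exact: is_derive_cst.
have -> : (fun t => \sum_(i <- a :: s) f i t) = f a + (fun t => \sum_(i <- s) f i t).
  by apply: funext => t; rewrite big_cons.
by rewrite big_cons; exact: is_deriveD.
Qed.

Lemma sum_derivable (I : finType) (f : I -> R -> R) (x : R) :
  (forall i, derivable (f i) x (1 : R)) ->
  derivable (fun t => \sum_(i : I) f i t) x (1 : R).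
Proof.
move=> hd.
have [] := @sum_is_derive I f (fun i => 'D_1 (f i) x) x (fun i => derivableP (hd i)).
by [].
Qed.

Lemma scal_is_derive (a : R) (f : R -> R) (d x : R) :
  is_derive x (1 : R) f d -> is_derive x (1 : R) (fun t => a * f t) (a * d).
Proof.
move=> h; have h2 := is_deriveM (is_derive_cst a x 1) h.
apply: (is_derive_eq h2); by rewrite /= scaler0 addr0.
Qed.

Lemma form_derivable (A : cmatrix R r n) (w : 'I_n -> R) (c x : R) :
  derivable (fun t : R => cm_form A (fun j => c + t * w j)) x (1 : R).
Proof.
rewrite /cm_form; apply: (@sum_derivable _ (fun i t => A i * \prod_(k < r) (c + t * w (i k)))) => i.
have [] := scal_is_derive (A i) _ _ _ (derivableP (prod_derivable _ (fun k => w (i k)) c x)).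
by [].
Qed.

Lemma form_derive0 (A : cmatrix R r n) (w : 'I_n -> R) (c : R) :
  is_derive (0 : R) (1 : R) (fun t : R => cm_form A (fun j => c + t * w j))
    (\sum_i A i * (c ^+ r.-1 * \sum_(k < r) w (i k))).
Proof.
rewrite /cm_form; apply: (@sum_is_derive _ (fun i t => A i * \prod_(k < r) (c + t * w (i k)))) => i.
exact: scal_is_derive (A i) _ _ _ (prod_derive0 _ _ _).
Qed.

Lemma powcomp_is_derive (f : R -> R) (q d x : R) : 0 < f x ->
  is_derive x (1 : R) f d ->
  is_derive x (1 : R) (fun t => f t `^ q) (q * f x `^ (q - 1) * d).
Proof.
move=> fx hf.
exact: (@is_derive1_comp R (fun u => u `^ q) f x _ _ (is_derive1_powR q fx) hf).
Qed.

Lemma spow_is_derive (w : 'I_n -> R) (c p x : R) : (forall j, 0 < c + x * w j) ->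
  is_derive x (1 : R) (fun t : R => \sum_(j < n) (c + t * w j) `^ p)
    (\sum_(j < n) (p * (c + x * w j) `^ (p - 1) * w j)).
Proof.
move=> hp.
apply: (@sum_is_derive _ (fun j t => (c + t * w j) `^ p)) => j.
exact: (@powcomp_is_derive (fun t => c + t * w j) p (w j) x (hp j) (affine_derive c (w j) x)).
Qed.

Lemma is_derive_uniq (f : R -> R) (x a b : R) :
  is_derive x (1 : R) f a -> is_derive x (1 : R) f b -> a = b.
Proof. by move=> [_ <-] [_ <-]. Qed.

End Helpers.

Theorem proposition18 (R : realType) (r n : nat) (A : cmatrix R r n) (p : R) :
  cm_symmetric A -> 1 < p ->
  eta p A = (n%:R : R) `^ (- (r%:R / p)) * `|cm_sum A| ->
  cm_regular A.
Proof.
move=> hA p1 heta k s t.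
have [->|st] := eqVneq s t; first by [].
have p0 : 0 < p by apply: lt_trans p1.
have n0 : (0 < n)%N := leq_ltn_trans (leq0n s) (ltn_ord s).
have r0 : (0 < r)%N := leq_ltn_trans (leq0n k) (ltn_ord k).
have nR : 0 < n%:R :> R by rewrite ltr0n.
pose c := (n%:R : R) `^ (- p^-1).
have c0 : 0 < c by apply: powR_gt0.
pose w := fun j : 'I_n => ((j == s)%:R - (j == t)%:R : R).
have wb : forall j, `|w j| <= 1.
  by move=> j; rewrite /w; case: (j == s); case: (j == t);
    rewrite /= ?subrr ?subr0 ?sub0r ?normrN ?normr1 ?normr0.
have pos : forall x : R, `|x| < c -> forall j, 0 < c + x * w j.
  move=> x hx j.
  have h1 : `|x * w j| < c.
    rewrite normrM; apply: le_lt_trans hx.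
    by rewrite -[leRHS]mulr1 ler_wpM2l.
  have h2 : - (x * w j) <= `|x * w j| by rewrite -normrN ler_norm.
  lra.
pose S := fun x : R => \sum_(j < n) (c + x * w j) `^ p.
pose b := fun x : R => S x `^ p^-1.
pose g := fun x : R => cm_form A (fun j => c + x * w j).
have Spos : forall x, `|x| < c -> 0 < S x.
  move=> x hx; rewrite /S (bigD1 s) //=.
  have h1 : 0 < (c + x * w s) `^ p by apply: powR_gt0; apply: pos.
  have h2 : 0 <= \sum_(i < n | i != s) (c + x * w i) `^ p.
    by apply: sumr_ge0 => i _; apply: powR_ge0.
  lra.
have ineq : forall x, `|x| < c -> `|g x| <= eta p A * b x ^+ r.
  move=> x hx.
  have e : \sum_(j < n) `|c + x * w j| `^ p = S x.
    by apply: eq_bigr => j _; rewrite gtr0_norm // pos.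
  have := key_ineq A p (fun j => c + x * w j) p0; rewrite e => h.
  exact: h (Spos x hx).
have eta0 : 0 <= eta p A by rewrite heta mulr_ge0 // powR_ge0.
have S0 : S 0 = 1.
  rewrite /S; under eq_bigr do rewrite mul0r addr0.
  rewrite sumr_const card_ord -powRrM mulNr mulVf ?gt_eqF //.
  by rewrite powR_inv1 ?ler0n // -[_ *+ n]mulr_natl mulfV // gt_eqF.
have b0 : b 0 = 1 by rewrite /b S0 powR1.
have g0 : g 0 = c ^+ r * cm_sum A.
  rewrite /g /cm_form /cm_sum mulr_sumr; apply: eq_bigr => i _.
  under eq_bigr do rewrite mul0r addr0.
  by rewrite prodr_const card_ord mulrC.
have etaE : eta p A = `|g 0|.
  rewrite heta g0 normrM (gtr0_norm (exprn_gt0 _ c0)); congr (_ * _).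
  rewrite /c -powR_mulrn ?ltW // -powRrM; congr (_ `^ _).
  by rewrite mulNr mulrC.
pose G1 := \sum_i A i * (c ^+ r.-1 * \sum_(k0 < r) w (i k0)).
have hG1 : is_derive (0 : R) (1 : R) g G1 := form_derive0 A w c.
have itv0 : (0 : R) \in `]-c, c[%R by rewrite in_itv /= oppr_lt0 c0.
have itvn : forall x : R, x \in `]-c, c[%R -> `|x| < c.
  by move=> x; rewrite in_itv /= => /andP [h1 h2]; rewrite ltr_norml h1 h2.
have cc : -c <= c by lra.
have G10 : G1 = 0.
  have [sA0|sA0] := eqVneq (cm_sum A) 0.
    have e0 : eta p A = 0 by rewrite etaE g0 sA0 mulr0 normr0.
    have hg0 : is_derive (0 : R) (1 : R) g 0.
      apply: (@derive1_at_max R g (-c) c 0 cc) => //.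
        by move=> x _; exact: form_derivable.
      move=> x /itvn hx; have := ineq x hx; rewrite e0 mul0r => h.
      rewrite g0 sA0 mulr0; exact: le_trans (ler_norm _) h.
    exact: is_derive_uniq hG1 hg0.
  have bder : forall x : R, `|x| < c -> derivable b x (1 : R).
    move=> x hx.
    have [] := powcomp_is_derive S p^-1 _ x (Spos x hx) (spow_is_derive w c p x (pos x hx)).
    by [].
  pose F := g ^+ 2 - (cst (eta p A) * b ^+ r) ^+ 2.
  have hFm : is_derive (0 : R) (1 : R) F 0.
    apply: (@derive1_at_max R F (-c) c 0 cc) => //.
      move=> x /itvn hx; apply: derivableB; first exact/derivableX/form_derivable.
      apply/derivableX/derivableM; first exact: derivable_cst.
      exact/derivableX/bder.
    move=> x /itvn hx; rewrite /F !fctE /=.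
    rewrite b0 expr1n mulr1 etaE -[in X in _ <= X](real_normK (num_real (g 0))) subrr subr_le0.
    rewrite -real_normK ?num_real //.
    have h := ineq x hx.
    rewrite etaE in h.
    by rewrite !expr2; apply: ler_pM.
  have sw : \sum_(j < n) w j = 0.
    have one : forall u : 'I_n, \sum_(j < n) ((j == u)%:R : R) = 1.
      move=> u; rewrite (bigD1 u) //= eqxx big1 ?addr0 // => j /negPf -> //.
    by rewrite /w sumrB !one subrr.
  have hS := spow_is_derive w c p 0 (pos 0 ltac:(by rewrite normr0)).
  have hS0 : is_derive (0 : R) (1 : R) S 0.
    apply: (is_derive_eq hS).
    under eq_bigr do rewrite mul0r addr0.
    by rewrite -mulr_sumr sw mulr0.
  have hb := powcomp_is_derive S p^-1 _ 0 (Spos 0 ltac:(by rewrite normr0)) hS0.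
  rewrite mulr0 in hb.
  have hF := is_deriveB (is_deriveX 2 hG1)
    (is_deriveX 2 (is_deriveM (is_derive_cst (eta p A) (0 : R) (1 : R)) (is_deriveX r hb))).
  have := is_derive_uniq _ _ _ _ hF hFm.
  rewrite !scaler0 addr0 !scaler0 subr0 => /eqP.
  rewrite /GRing.scale /= mulf_eq0 mulf_eq0 pnatr_eq0 /= expr1 g0 mulf_eq0 expf_eq0.
  by rewrite (gt_eqF c0) andbF (negbTE sA0) /= => /eqP.
have hsl : forall k0 : 'I_r,
    \sum_i A i * w (i k0) = slice_sum A k0 s - slice_sum A k0 t.
  move=> k0; rewrite /slice_sum [X in _ = X - _]big_mkcond [X in _ = _ - X]big_mkcond.
  rewrite -sumrB; apply: eq_bigr => i _.
  by rewrite /w mulrBr; case: (i k0 == s); case: (i k0 == t); rewrite ?mulr1 ?mulr0.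
have eG : G1 = c ^+ r.-1 * \sum_(k0 < r) (slice_sum A k0 s - slice_sum A k0 t).
  rewrite /G1; under eq_bigr do rewrite mulrCA mulr_sumr.
  rewrite -mulr_sumr exchange_big /=; congr (_ * _).
  by apply: eq_bigr => k0 _; exact: hsl.
move: G10; rewrite eG.
under eq_bigr => k0 _ do rewrite (slice_sym A k0 k s hA) (slice_sym A k0 k t hA).
rewrite sumr_const card_ord => /eqP; rewrite mulf_eq0 expf_eq0 (gt_eqF c0) andbF /=.
rewrite mulrn_eq0 (gtn_eqF r0) /= subr_eq0 => /eqP //.
Qed.
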